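(* For every $\Delta q>0$ there exist $k>0$ and $\theta\in(0,1/\Delta q)$ such that, when $1/b$ is Gamma distributed with shape $k$ and scale $\theta$, $$e^{(k+1)\ln(1+\Delta q\,\theta)}=\frac{\mathbb E(1/b)}{M'_{1/b}(-\Delta q)}<M_{1/b}(\Delta q)=(1-\Delta q\,\theta)^{-k},$$ i.e. the R$^2$DP Laplace mechanism with Gamma-distributed $1/b$ can satisfy the necessary condition $\frac{\mathbb E(1/b)}{M'_{1/b}(-\Delta q)}<M_{1/b}(\Delta q)$ for improving on the Laplace mechanism.
   Context: $M_{1/b}(t)=\mathbb E[e^{t/b}]$ is the moment generating function of $1/b$ and $M'_{1/b}$ its derivative. For the Gamma distribution with shape $k$ and scale $\theta$, $M(t)=(1-\theta t)^{-k}$ for $t<1/\theta$. The R$^2$DP Laplace mechanism adds $\mathrm{Lap}(b)$ noise (density $\frac1{2b}e^{-|x|/b}$) with random scale $b$ to a query of sensitivity $\Delta q$. *)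

(* Defs.v *)
From mathcomp Require Import all_boot all_order all_algebra.
From mathcomp Require Import all_classical all_reals all_analysis.
Set Implicit Arguments. Unset Strict Implicit. Unset Printing Implicit Defensive.
Import Order.TTheory GRing.Theory Num.Theory.
Local Open Scope ring_scope.

(* Moment generating function of a Gamma(shape k, scale theta) random
   variable, as given in the paper's context: M(t) = (1 - theta t)^(-k),
   valid for t < 1/theta. *)
Definition gamma_mgf (R : realType) (k theta : R) (t : R) : R :=
  (1 - theta * t) `^ (- k).

Definition gamma_mean (R : realType) (k theta : R) : R := k * theta.

(* Main.v *)
Require Import Defs.
From mathcomp Require Import all_boot all_order all_algebra.
From mathcomp Require Import all_classical all_reals all_analysis.
From mathcomp Require Import lra.
Import Order.TTheory GRing.Theory Num.Theory.
Local Open Scope ring_scope.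

Lemma deriv_val (R : realType) (k th x : R) : 0 < 1 - th * x ->
  derive1 (gamma_mgf k th) x = k * th * (1 - th * x) `^ (- k - 1).
Proof.
move=> hx.
pose f : R -> R := (cst (1:R) - th \*: (id : R -> R)).
have -> : gamma_mgf k th = ((@powR R)^~ (- k)) \o f.
  by apply/funext => t; rewrite /f /= /gamma_mgf.
have dfi : is_derive x 1 f (- th).
  rewrite /f; apply: is_derive_eq.
  by rewrite sub0r; congr (- _); exact: mulr1.
have hx' : 0 < f x by rewrite /f /=.
have dg := is_derive1_powR (- k) hx'.
rewrite derive1_comp; first last.
- exact: ex_derive.
- exact: ex_derive.
have e1 := @derive_val _ _ _ _ _ _ _ dg. have e2 := @derive_val _ _ _ _ _ _ _ dfi.
rewrite !derive1E e1 e2.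
have -> : f x = 1 - th * x by [].
by rewrite mulrN !mulNr opprK mulrAC.
Qed.

Theorem lemmaB1 (R : realType) (dq : R) : 0 < dq ->
  exists k theta : R,
    [/\ 0 < k, 0 < theta & theta < 1 / dq] /\
    [/\ expR ((k + 1) * ln (1 + dq * theta))
       = gamma_mean k theta / derive1 (gamma_mgf k theta) (- dq),
     gamma_mean k theta / derive1 (gamma_mgf k theta) (- dq) < gamma_mgf k theta dq
     & gamma_mgf k theta dq = (1 - dq * theta) `^ (- k)].
Proof.
move=> hdq.
have dq0 : dq != 0 by rewrite gt_eqF.
exists 2, (1 / (2 * dq)).
have hth : dq * (1 / (2 * dq)) = 2^-1.
  by rewrite mul1r invfM mulrCA mulfV // mulr1.
have h1 : 1 - (1 / (2 * dq)) * (- dq) = 3/2.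
  rewrite mulrN opprK mulrC hth; lra.
have hpos : 0 < 1 - (1 / (2 * dq)) * (- dq) by rewrite h1.
have hthp : 0 < 1 / (2 * dq) by rewrite divr_gt0 // mulr_gt0.
have hrat : gamma_mean 2 (1 / (2 * dq)) / derive1 (gamma_mgf 2 (1 / (2 * dq))) (- dq)
   = (3/2) ^+ 3.
  rewrite deriv_val // h1 /gamma_mean.
  have -> : - 2 - 1 = - (3%:R) :> R by lra.
  rewrite powR_invn; last by lra.
  rewrite invf_div mulrC divfK //.
  by rewrite mulf_neq0 // gt_eqF.
split.
  split=> //.
  rewrite !mul1r ltf_pV2 ?posrE ?mulr_gt0 //; lra.
rewrite hrat; split => //.
  rewrite hth.
  have -> : (2 + 1 : R) = 3%:R by lra.
  have -> : (1 + 2^-1 : R) = 3/2 by lra.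
  rewrite -powR_mulrn; last by lra.
  rewrite /powR ifF //; apply/negbTE; lra.
  rewrite /gamma_mgf [_ * dq]mulrC hth.
  have -> : (1 - 2^-1 : R) = 2^-1 by lra.
  rewrite powR_invn; last by lra.
  rewrite exprVn invrK !exprS expr0; lra.
by rewrite /gamma_mgf mulrC.
Qed.
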